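(* Let $S$ and $T$ be trees. For each shuffle $A$ of $S$ and $T$, the edge labelling gives an injective map of posets $E(A)\hookrightarrow E(S)\times E(T)$ and hence an embedding $BA\hookrightarrow B(E(S)\times E(T))\cong BS\times BT$. Then $$BS\times BT=\bigcup_{A\in Sh(S,T)} BA,$$ i.e. the images of these embeddings jointly cover $BS\times BT$. Equivalently at the simplicial level, every chain $(s_0,t_0)\le\dots\le(s_n,t_n)$ in the product poset $E(S)\times E(T)$ is contained in $E(A)$ for some shuffle $A$.
   Context: A tree is a finite connected graph without cycles whose external edges are open. One external edge is the root; the others are leaves. Each vertex has one outgoing edge (towards the root) and a strictly positive number of incoming edges. No planar structure. $E(T)$ is the edge set partially ordered by $e\le e'$ iff $e$ lies on the path from $e'$ to the root. For a finite poset $P$, its classifying space $B(P)$ is the geometric realization of its nerve (the simplicial complex of chains of $P$); $BT:=B(E(T))$. Concretely, a point of $BT$ is a function $\lambda:E(T)\to[0,1]$ with $\sum_e\lambda(e)=1$ whose support lies in a single chain (branch), with the subspace topology from $[0,1]^{E(T)}$. There is a natural homeomorphism $B(P\times Q)\cong B(P)\times B(Q)$ for finite posets $P,Q$. Shuffle: for trees $S,T$ with root edges $r_S,r_T$, a shuffle is a tree $A$ with edges labelled by pairs $(s,t)\in E(S)\times E(T)$ such that: (1) the root of $A$ is labelled $(r_S,r_T)$; (2) the labelling restricts to a bijection from leaves of $A$ onto $\mathrm{Leaves}(S)\times\mathrm{Leaves}(T)$; (3) if an edge labelled $(s,t)$ is not a leaf, the incoming edges of the vertex of $A$ above it are labelled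 either exactly $(s_1,t),\dots,(s_m,t)$ for $s_1,\dots,s_m$ the edges immediately above $s$ in $S$, or exactly $(s,t_1),\dots,(s,t_n)$ for $t_1,\dots,t_n$ the edges immediately above $t$ in $T$. Shuffles are taken up to isomorphism of labelled trees; $Sh(S,T)$ is the set of shuffles. *)

(* Defs.v *)
From HB Require Import structures.
From mathcomp Require Import all_boot.
Set Implicit Arguments. Unset Strict Implicit. Unset Printing Implicit Defensive.

(* A tree (no planar structure, no stumps) encoded by its finite set of edges,
   its root edge, and the map sending a non-root edge to the outgoing edge of
   the vertex above which it sits (the root is sent to itself).  Every edge
   reaches the root by iterating the parent map (connected, acyclic).
   The vertex above a non-leaf edge e has as incoming edges the children of e;
   an edge without children is a leaf (so every vertex has >= 1 inputs). *)
Record tree := Tree {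
  edge : finType;
  troot : edge;
  tpar : edge -> edge;
  tpar_root : tpar troot = troot;
  treach : forall e, exists n, iter n tpar e = troot
}.

Definition children (T : tree) (e : edge T) : {set edge T} :=
  [set c | (c != @troot T) && (@tpar T c == e)].

Definition leaves (T : tree) : {set edge T} :=
  [set e | @children T e == set0].

Definition tle (T : tree) (e e' : edge T) : Prop :=
  exists n, iter n (@tpar T) e' = e.

Definition ptle (S T : tree) (p q : edge S * edge T) : Prop :=
  tle p.1 q.1 /\ tle p.2 q.2.

Definition is_chain (X : finType) (le : X -> X -> Prop) (C : {set X}) : Prop :=
  forall x y, x \in C -> y \in C -> le x y \/ le y x.

Record shuffle (S T : tree) := Shuffle {
  sh_tree : tree;
  sh_lab : edge sh_tree -> edge S * edge T;
  sh_root : sh_lab (troot sh_tree) = (troot S, troot T);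
  sh_leaves_inj : {in leaves sh_tree &, injective sh_lab};
  sh_leaves_img : sh_lab @: leaves sh_tree = setX (leaves S) (leaves T);
  sh_vertex : forall a, a \notin leaves sh_tree ->
    {in children a &, injective sh_lab} /\
    (sh_lab @: children a =
       [set (s', (sh_lab a).2) | s' in children (sh_lab a).1]
     \/ sh_lab @: children a =
       [set ((sh_lab a).1, t') | t' in children (sh_lab a).2])
}.

(* Main.v *)
Require Import Defs.
From HB Require Import structures.
From mathcomp Require Import all_boot.
From Stdlib Require Import ClassicalEpsilon Lia.
From mathcomp Require Import zify.
Set Implicit Arguments. Unset Strict Implicit. Unset Printing Implicit Defensive.

Definition decb (P : Prop) : bool :=
  if excluded_middle_informative P then true else false.
Lemma decbP (P : Prop) : reflect P (decb P).
Proof. rewrite /decb; case: excluded_middle_informative => h; by constructor. Qed.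

Section Gen.
Variable T : tree.
Local Notation par := (@tpar T).
Local Notation r := (@troot T).
Implicit Types a b c e x : edge T.

Lemma tle_refl e : tle e e. Proof. by exists 0. Qed.
Lemma tle_trans a b c : tle a b -> tle b c -> tle a c.
Proof. by move=> [m Hm] [n Hn]; exists (m + n); rewrite iterD Hn. Qed.
Lemma tle_par e : tle (par e) e. Proof. by exists 1. Qed.
Lemma iter_root n : iter n par r = r.
Proof. by elim: n => //= n ->; rewrite tpar_root. Qed.
Lemma tle_root e : tle r e. Proof. by case: (treach e) => n h; exists n. Qed.

Lemma treachb e : exists n, (fun n => iter n par e == r) n.
Proof. by case: (treach e) => n h; exists n; apply/eqP. Qed.
Definition dep e : nat := ex_minn (treachb e).
Lemma dep_spec e : iter (dep e) par e = r.
Proof. by rewrite /dep; case: ex_minnP => n /eqP. Qed.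
Lemma dep_min e n : iter n par e = r -> dep e <= n.
Proof. by rewrite /dep; case: ex_minnP => m _ H /eqP /H. Qed.
Lemma dep_root : dep r = 0.
Proof. by apply/eqP; rewrite -leqn0; apply: dep_min. Qed.
Lemma dep0 e : dep e = 0 -> e = r.
Proof. by move=> h; have := dep_spec e; rewrite h. Qed.
Lemma dep_par e : e != r -> dep e = (dep (par e)).+1.
Proof.
move=> ne; have h1 : dep e <= (dep (par e)).+1.
  by apply: dep_min; rewrite iterSr dep_spec.
case E: (dep e) h1 => [|k] h1; first by move: ne; rewrite (dep0 E) eqxx.
have : dep (par e) <= k by apply: dep_min; rewrite -iterSr -E dep_spec.
move: h1; rewrite ltnS => h1 h2; apply/eqP; rewrite eqSS eqn_leq h1 h2 //.
Qed.
Lemma dep_iter n e : dep (iter n par e) = dep e - n.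
Proof.
elim: n e => [|n IH] e; first by rewrite subn0.
rewrite iterSr IH; case: (eqVneq e r) => [->|ne].
  by rewrite tpar_root dep_root.
by rewrite (dep_par ne) subSS.
Qed.
Lemma tle_dep a b : tle a b -> dep a <= dep b.
Proof. by case=> n <-; rewrite dep_iter leq_subr. Qed.
Lemma tle_dep_eq a b : tle a b -> dep a = dep b -> a = b.
Proof.
case=> n <-; rewrite dep_iter; case: n => [//|n] h.
have : dep b = 0 by lia.
by move/dep0 => ->; rewrite iter_root.
Qed.
Lemma tle_anti a b : tle a b -> tle b a -> a = b.
Proof.
move=> h1 h2; apply: (tle_dep_eq h1); apply/eqP; rewrite eqn_leq.
by rewrite (tle_dep h1) (tle_dep h2).
Qed.
Lemma par_neq e : e != r -> par e != e.
Proof. by move=> ne; apply/eqP => h; have := dep_par ne; rewrite h; lia. Qed.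
Lemma tle_cmp a b c : tle a c -> tle b c -> tle a b \/ tle b a.
Proof.
case=> m <- [n <-]; case: (leqP m n) => h.
  by right; exists (n - m); rewrite -iterD subnK.
by left; exists (m - n); rewrite -iterD subnK // ltnW.
Qed.
Lemma tle_step a x : tle a x -> a != x -> exists c, c != r /\ par c = a /\ tle c x.
Proof.
case=> n; elim: n => [|n IH] /=; first by move=> ->; rewrite eqxx.
move=> h ne; case: (eqVneq (iter n par x) r) => [E|E].
  by apply: IH => //; move: h; rewrite E tpar_root.
by exists (iter n par x); split=> //; split=> //; exists n.
Qed.
Lemma tle_below a x : tle a x -> a != x -> x != r /\ tle a (par x).
Proof.
case=> [[|n]] /= h ne; first by rewrite h eqxx in ne.
split; last by exists n; rewrite -iterSr.
apply/eqP=> xr; move: h ne; rewrite xr iter_root tpar_root => ->; by rewrite eqxx.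
Qed.
Lemma leaf_max l x : l \in leaves T -> tle l x -> x = l.
Proof.
move=> hl h; apply/eqP; apply/negPn/negP => ne; rewrite eq_sym in ne.
case: (tle_step h ne) => c [cr [pc _]].
move: hl; rewrite inE => /eqP /setP /(_ c); rewrite !inE cr pc eqxx //.
Qed.
Lemma leaf_above e : exists l, l \in leaves T /\ tle e l.
Proof.
pose P := fun x => decb (tle e x).
have P0 : P e by apply/decbP; apply: tle_refl.
case: (arg_maxnP dep P0) => m /decbP hm hmax.
exists m; split=> //; rewrite inE; apply/eqP/setP => c; rewrite !inE.
apply/negP => /andP [cr /eqP pc].
have : P c by apply/decbP; apply: tle_trans hm _; rewrite -pc; apply: tle_par.
move/hmax; rewrite (dep_par cr) pc; lia.
Qed.
End Gen.
Section Part1.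
Variables (S T : tree) (A : shuffle S T).
Local Notation TA := (sh_tree A).
Local Notation lab := (@sh_lab S T A).

Definition dp (x : edge S * edge T) := dep x.1 + dep x.2.

Lemma ptle_refl (x : edge S * edge T) : ptle x x. Proof. by split; apply: tle_refl. Qed.
Lemma ptle_trans (x y z : edge S * edge T) : ptle x y -> ptle y z -> ptle x z.
Proof. by case=> h1 h2 [h3 h4]; split; [apply: tle_trans h3|apply: tle_trans h4]. Qed.

Lemma lab_child c : c != troot TA ->
  (exists s', s' != troot S /\ tpar s' = (lab (tpar c)).1 /\ lab c = (s', (lab (tpar c)).2)) \/
  (exists t', t' != troot T /\ tpar t' = (lab (tpar c)).2 /\ lab c = ((lab (tpar c)).1, t')).
Proof.
move=> cr; set a := tpar c.
have ca : c \in children a by rewrite inE cr eqxx.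
have na : a \notin leaves TA.
  by rewrite inE; apply/negP => /eqP/setP/(_ c); rewrite ca inE.
have lc : lab c \in lab @: children a by apply: imset_f.
case: (sh_vertex na) => _ [] E; rewrite E in lc.
  left; case/imsetP: lc => s' hs' ->; exists s'; move: hs'; rewrite inE => /andP [h1 /eqP h2]; done.
right; case/imsetP: lc => t' ht' ->; exists t'; move: ht'; rewrite inE => /andP [h1 /eqP h2]; done.
Qed.

Lemma lab_par_le c : ptle (lab (tpar c)) (lab c).
Proof.
case: (eqVneq c (troot TA)) => [->|cr]; first by rewrite tpar_root; apply: ptle_refl.
case: (lab_child cr) => [[s' [_ [h1 ->]]]|[t' [_ [h1 ->]]]]; split => /=;
  by [rewrite -h1; apply: tle_par|apply: tle_refl].
Qed.

Lemma lab_mono a a' : tle a a' -> ptle (lab a) (lab a').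
Proof.
case=> n; elim: n a' => [|n IH] a' /=; first by move=> ->; apply: ptle_refl.
move=> h; have {}h : iter n (@tpar TA) (tpar a') = a by rewrite -iterSr.
apply: ptle_trans (IH _ h) (lab_par_le _).
Qed.

Lemma dep_lab c : dp (lab c) = dep c.
Proof.
move: {2}(dep c) (erefl (dep c)) => n; elim: n c => [|n IH] c.
  by move/dep0 => ->; rewrite sh_root /dp /= !dep_root.
move=> hc; have cr : c != troot TA by apply/eqP => E; rewrite E dep_root in hc.
move: hc; rewrite (dep_par cr) => -[] /IH; rewrite /dp.
case: (lab_child cr) => [[s' [h0 [h1 ->]]]|[t' [h0 [h1 ->]]]] /= <-;
  rewrite -h1 (dep_par h0); lia.
Qed.

Lemma leaf_step a l1 l2 : l1 \in leaves S -> l2 \in leaves T ->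
  tle (lab a).1 l1 -> tle (lab a).2 l2 -> a \notin leaves TA ->
  exists c, tpar c = a /\ c != troot TA /\ tle (lab c).1 l1 /\ tle (lab c).2 l2 /\
    dp (lab c) = (dp (lab a)).+1 /\ dp (lab a) < dep l1 + dep l2.
Proof.
move=> hl1 hl2 h1 h2 na.
have ne : lab @: children a != set0.
  rewrite imset_eq0; apply: contra na; by rewrite inE.
case: (sh_vertex na) => _ [] E; rewrite E in ne.
- case: (eqVneq (lab a).1 l1) => [e1|n1].
    move: ne; rewrite e1; move: hl1; rewrite inE => /eqP ->.
    by rewrite imset0 eqxx.
  case: (tle_step h1 n1) => s' [s'r [ps' hs']].
  have : (s', (lab a).2) \in lab @: children a.
    by rewrite E; apply/imsetP; exists s' => //; rewrite inE s'r ps' eqxx.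
  case/imsetP => c; rewrite inE => /andP [cr /eqP pc] lc.
  exists c; rewrite -lc /=; do 4 split => //.
  split; first by rewrite /dp /= (dep_par s'r) ps'; lia.
  have := tle_dep h1; have := tle_dep h2; have : dep (lab a).1 != dep l1.
    by apply: contra n1 => /eqP; move/(tle_dep_eq h1) => ->.
  rewrite /dp; lia.
- case: (eqVneq (lab a).2 l2) => [e1|n1].
    move: ne; rewrite e1; move: hl2; rewrite inE => /eqP ->.
    by rewrite imset0 eqxx.
  case: (tle_step h2 n1) => s' [s'r [ps' hs']].
  have : ((lab a).1, s') \in lab @: children a.
    by rewrite E; apply/imsetP; exists s' => //; rewrite inE s'r ps' eqxx.
  case/imsetP => c; rewrite inE => /andP [cr /eqP pc] lc.
  exists c; rewrite -lc /=; do 4 split => //.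
  split; first by rewrite /dp /= (dep_par s'r) ps'; lia.
  have := tle_dep h1; have := tle_dep h2; have : dep (lab a).2 != dep l2.
    by apply: contra n1 => /eqP; move/(tle_dep_eq h2) => ->.
  rewrite /dp; lia.
Qed.

Lemma leaf_reach a l1 l2 : l1 \in leaves S -> l2 \in leaves T ->
  tle (lab a).1 l1 -> tle (lab a).2 l2 ->
  exists b, b \in leaves TA /\ tle a b /\ lab b = (l1, l2).
Proof.
move=> hl1 hl2; move: {2}(dep l1 + dep l2 - dp (lab a)) (leqnn (dep l1 + dep l2 - dp (lab a))) => k.
elim: k a => [|k IH] a hk h1 h2.
- case: (boolP (a \in leaves TA)) => la.
    exists a; split=> //; split; first by apply: tle_refl.
    have : lab a \in setX (leaves S) (leaves T) by rewrite -(sh_leaves_img A); apply: imset_f.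
    rewrite inE => /andP [a1 a2].
    by rewrite (leaf_max a1 h1) (leaf_max a2 h2); case: (lab a).
  case: (leaf_step hl1 hl2 h1 h2 la) => c [_ [_ [_ [_ [_ hlt]]]]]; lia.
- case: (boolP (a \in leaves TA)) => la.
    exists a; split=> //; split; first by apply: tle_refl.
    have : lab a \in setX (leaves S) (leaves T) by rewrite -(sh_leaves_img A); apply: imset_f.
    rewrite inE => /andP [a1 a2].
    by rewrite (leaf_max a1 h1) (leaf_max a2 h2); case: (lab a).
  case: (leaf_step hl1 hl2 h1 h2 la) => c [pc [cr [c1 [c2 [dc hlt]]]]].
  case: (IH c _ c1 c2) => [|b [lb [cb eb]]]; first by rewrite dc; lia.
  exists b; split=> //; split=> //; apply: tle_trans cb; rewrite -pc; apply: tle_par.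
Qed.

Lemma lab_inj : injective lab.
Proof.
move=> a a' E.
case: (leaf_above (lab a).1) => l1 [hl1 h1].
case: (leaf_above (lab a).2) => l2 [hl2 h2].
case: (leaf_reach hl1 hl2 h1 h2) => b [lb [ab eb]].
rewrite E in h1 h2.
case: (leaf_reach hl1 hl2 h1 h2) => b' [lb' [ab' eb']].
have bb : b = b' by apply: (sh_leaves_inj lb lb'); rewrite eb eb'.
rewrite -bb in ab'.
have dd : dep a = dep a' by rewrite -!dep_lab E.
case: (tle_cmp ab ab') => h; [exact: tle_dep_eq h dd| symmetry; exact: tle_dep_eq h (esym dd)].
Qed.
End Part1.
Definition tleb (X : tree) (a b : edge X) := decb (tle a b).
Lemma tlebP (X : tree) (a b : edge X) : reflect (tle a b) (tleb a b).
Proof. exact: decbP. Qed.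
Definition ltb (X : tree) (a b : edge X) := tleb a b && (a != b).

Lemma par_notleaf (X : tree) (c : edge X) : c != troot X -> tpar c \notin leaves X.
Proof. by move=> cr; rewrite inE; apply/negP => /eqP /setP /(_ c); rewrite !inE cr eqxx. Qed.

Section Part2.
Variables (S T : tree) (C : {set edge S * edge T}).
Hypothesis Cch : is_chain (@ptle S T) C.

Definition Xs (s : edge S) := [set c in C | tleb c.1 s].
Definition u (s : edge S) : edge T :=
  if [pick c in Xs s] is Some c0 then ([arg max_(c > c0 in Xs s) dp c]).2 else troot T.

Lemma u_spec s : (forall c, c \notin Xs s) /\ u s = troot T \/
  (exists m, m \in Xs s /\ u s = m.2 /\ forall c, c \in Xs s -> ptle c m).
Proof.
rewrite /u; case: pickP => [c0 hc0|h0]; last first.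
  by left; split=> // c; rewrite h0.
right; case: arg_maxnP => // m hm hmax; exists m; split=> //; split=> // c hc.
have [mC _] : m \in C /\ true by move: hm; rewrite inE => /andP [].
have [cC _] : c \in C /\ true by move: hc; rewrite inE => /andP [].
case: (Cch cC mC) => // -[h1 h2].
have := hmax c hc; rewrite /dp => hle.
have := tle_dep h1; have := tle_dep h2 => d2 d1.
have e1 : m.1 = c.1 by apply: tle_dep_eq h1 _; lia.
have e2 : m.2 = c.2 by apply: tle_dep_eq h2 _; lia.
have -> : c = m by case: c m e1 e2 {hm hmax hc cC mC h1 h2 hle d1 d2} => ? ? [? ?] /= -> ->.
exact: ptle_refl.
Qed.

Lemma u_mono s s' : tle s s' -> tle (u s) (u s').
Proof.
move=> ss'; case: (u_spec s) => [[_ ->]|[m [hm [-> _]]]]; first exact: tle_root.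
have hm' : m \in Xs s'.
  move: hm; rewrite !inE => /andP [-> /tlebP h] /=; apply/tlebP; exact: tle_trans ss'.
case: (u_spec s') => [[h _]|[m' [_ [-> H]]]]; first by rewrite (negbTE (h m)) in hm'.
by case: (H m hm').
Qed.

Definition lo (s : edge S) : edge T := if s == troot S then troot T else u (tpar s).

Lemma lo_u s : tle (lo s) (u s).
Proof. rewrite /lo; case: eqP => _; [exact: tle_root|apply: u_mono; exact: tle_par]. Qed.

Definition rega (x : edge S * edge T) := tle (lo x.1) x.2 /\ tle x.2 (u x.1).

Lemma C_rega c : c \in C -> rega c.
Proof.
move=> cC; have cX : c \in Xs c.1 by rewrite inE cC; apply/tlebP; apply: tle_refl.
split; last first.
  case: (u_spec c.1) => [[h _]|[m [_ [-> H]]]]; first by rewrite (negbTE (h c)) in cX.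
  by case: (H c cX).
rewrite /lo; case: eqP => [_|/eqP cr]; first exact: tle_root.
case: (u_spec (tpar c.1)) => [[_ ->]|[m [hm [-> _]]]]; first exact: tle_root.
move: hm; rewrite inE => /andP [mC /tlebP mp].
case: (Cch cC mC) => -[h1 h2] //.
have := tle_anti (tle_trans h1 mp) (tle_par c.1) => E.
by move: (par_neq cr); rewrite -E eqxx.
Qed.

Definition lf (s : edge S) := s \in leaves S.
Definition inE' (x : edge S * edge T) : bool :=
  (tleb (lo x.1) x.2 && tleb x.2 (u x.1)) ||
  (~~ tleb x.2 (u x.1) && (lf x.1 || ltb (tpar x.2) (u x.1))).
Definition pp (x : edge S * edge T) : edge S * edge T :=
  if tleb x.2 (u x.1) then (if x.2 == lo x.1 then (tpar x.1, x.2) else (x.1, tpar x.2))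
  else (if (x.1 != troot S) && ltb (tpar x.2) (u (tpar x.1)) then (tpar x.1, x.2)
        else (x.1, tpar x.2)).
Definition dir (x : edge S * edge T) := ltb x.2 (u x.1) || lf x.1.

Definition rt : edge S * edge T := (troot S, troot T).

Lemma rt_in : inE' rt.
Proof.
rewrite /inE' /= /lo eqxx; apply/orP; left; apply/andP; split; apply/tlebP;
  [exact: tle_refl|exact: tle_root].
Qed.
Lemma pp_rt : pp rt = rt.
Proof.
rewrite /pp /= /lo eqxx.
have -> : tleb (troot T) (u (troot S)) by apply/tlebP; exact: tle_root.
by rewrite eqxx tpar_root.
Qed.
Lemma lo_ne s : s != troot S -> lo s = u (tpar s).
Proof. by rewrite /lo => /negbTE ->. Qed.
Lemma lo_r : lo (troot S) = troot T.
Proof. by rewrite /lo eqxx. Qed.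

Lemma tle_r_eq (X : tree) (a : edge X) : tle a (troot X) -> a = troot X.
Proof. by move=> h; apply: tle_anti h (tle_root _). Qed.

Lemma ltbP' (X : tree) (a b : edge X) : ltb a b = true <-> tle a b /\ a <> b.
Proof.
rewrite /ltb; split; first by case/andP => /tlebP h /eqP.
by case=> /tlebP -> /eqP.
Qed.

Lemma pp_spec y : inE' y -> y != rt -> inE' (pp y) /\
  ((y.1 != troot S /\ pp y = (tpar y.1, y.2) /\ ~~ dir (pp y)) \/
   (y.2 != troot T /\ pp y = (y.1, tpar y.2) /\ dir (pp y))).
Proof.
case: y => s t hin hne; move: hin; rewrite /inE' /pp /=; case: (tlebP t (u s)) => Ha /=.
- rewrite orbF andbT => /tlebP hlo.
  case: (eqVneq t (lo s)) => Hl.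
  + have sr : s != troot S.
      apply: contraNneq hne => E; move: Hl; rewrite E lo_r => ->; done.
    rewrite (lo_ne sr) in Hl; subst t.
    split.
      apply/orP; left; rewrite /=; apply/andP; split; apply/tlebP; [exact: lo_u|exact: tle_refl].
    left; split=> //; split=> //; rewrite /dir /= negb_or; apply/andP; split.
      by rewrite /ltb eqxx andbF.
    exact: par_notleaf.
  + have tr : t != troot T.
      apply: contra_neq Hl => E; rewrite E in hlo *; by rewrite (tle_r_eq hlo).
    have h1 : tle (lo s) (tpar t) by case: (tle_below hlo _) => //; rewrite eq_sym.
    have h2 : tle (tpar t) (u s) by apply: tle_trans (tle_par t) Ha.
    split.
      apply/orP; left; apply/andP; split; apply/tlebP => //.
    right; split=> //; split=> //; rewrite /dir /=; apply/orP; left; apply/ltbP'; split=> //.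
    move=> E; have := tle_anti (tle_par t) (tle_trans Ha _); rewrite -E => /(_ (tle_refl _)) E2.
    by move: (par_neq tr); rewrite E2 eqxx.
- have tr : t != troot T by apply: contra_notN Ha => /eqP ->; exact: tle_root.
  have Hb : ~~ tleb t (u s) by apply/tlebP.
  rewrite ?andbF /= => hb.
  case: (boolP ((s != troot S) && ltb (tpar t) (u (tpar s)))) => Hc.
  + case/andP: Hc => sr /ltbP' [c1 c2].
    split.
      rewrite /=; apply/orP; right; apply/andP; split.
        apply/tlebP => h; apply: Ha; apply: tle_trans h (u_mono (tle_par s)).
      by apply/orP; right; rewrite /ltb; apply/andP; split; [apply/tlebP|apply/eqP].
    left; split=> //; split=> //; rewrite /dir /= negb_or; apply/andP; split.
      rewrite /ltb; apply/nandP; left; apply/tlebP => h; apply: Ha.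
      apply: tle_trans h (u_mono (tle_par s)).
    exact: par_notleaf.
  + split; last first.
      right; split=> //; split=> //.
      rewrite /dir /=; case/orP: hb => [->|->]; by rewrite ?orbT.
    rewrite /=; case: (tlebP (tpar t) (u s)) => Hp.
    * apply/orP; left; rewrite andbT; apply/tlebP.
      case: (eqVneq s (troot S)) => [->|sr]; first by rewrite lo_r; exact: tle_root.
      rewrite (lo_ne sr); case: (tle_cmp (lo_u s) Hp); rewrite (lo_ne sr) => // h.
      case: (eqVneq (tpar t) (u (tpar s))) => [->|ne]; first exact: tle_refl.
      by move: Hc; rewrite sr /= /ltb ne andbT; move/tlebP.
    * rewrite /= ?andbF /=.
      case/orP: hb => [->//|/ltbP' [h _]]; exfalso; exact: Hp h.
Qed.
Lemma rega_in x : rega x -> inE' x.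
Proof.
case=> h1 h2; rewrite /inE'; apply/orP; left; apply/andP.
by split; apply/tlebP.
Qed.
Lemma regb_in x : ~ tle x.2 (u x.1) -> lf x.1 || ltb (tpar x.2) (u x.1) -> inE' x.
Proof.
move=> h1 h2; rewrite /inE'.
have /negbTE -> : ~~ tleb x.2 (u x.1) by apply/tlebP.
by rewrite andbF h2.
Qed.

Lemma down_T x t' : inE' x -> dir x -> t' != troot T -> tpar t' = x.2 ->
  inE' (x.1, t') /\ pp (x.1, t') = x.
Proof.
case: x => s t /= hin hd tr pt.
have tt' : tle t t' by rewrite -pt; exact: tle_par.
rewrite /inE' /dir /= in hin hd; rewrite /pp /=.
move: hin hd; case: (tlebP t (u s)) => Ha /=.
- rewrite orbF andbT => /tlebP hlo hd.
  case: (tlebP t' (u s)) => Hb /=.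
  + split; first by apply: rega_in; split => //; exact: tle_trans tt'.
    case: eqP => [E|_]; last by rewrite pt.
    have h' : tle t' t by rewrite E.
    have E2 := tle_anti tt' h'.
    by move: (par_neq tr); rewrite pt E2 eqxx.
  + split; first by apply: regb_in => //=; rewrite pt orbC.
    rewrite pt; case: (eqVneq s (troot S)) => [->|sr] //=.
    case: (boolP (ltb t (u (tpar s)))) => //= /ltbP' [h1 h2].
    by exfalso; apply: h2; apply: (tle_anti h1); rewrite -(lo_ne sr).
- rewrite andbF /= => hb hd.
  have ls : lf s by case/orP: hd => // /ltbP' [h _]; exfalso; exact: Ha h.
  have Hb : ~ tle t' (u s) by move=> h; apply: Ha; exact: tle_trans h.
  have /negbTE -> /= : ~~ tleb t' (u s) by apply/tlebP.
  split; first by apply: regb_in => //=; rewrite ls.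
  rewrite pt; case: (boolP ((s != troot S) && ltb t (u (tpar s)))) => //.
  case/andP => _ /ltbP' [h _]; exfalso; apply: Ha; exact: tle_trans h (u_mono (tle_par s)).
Qed.

Lemma down_S x s' : inE' x -> ~~ dir x -> s' != troot S -> tpar s' = x.1 ->
  inE' (s', x.2) /\ pp (s', x.2) = x.
Proof.
case: x => s t /= hin hd sr ps.
move: hd; rewrite /dir /= negb_or => /andP [nlt nlf].
have ss' : tle s s' by rewrite -ps; exact: tle_par.
have los : lo s' = u s by rewrite lo_ne // ps.
rewrite /inE' /= (negbTE nlf) /= in hin; rewrite /pp /=.
move: hin; case: (tlebP t (u s)) => Ha /=.
- have E : t = u s.
    apply/eqP; apply: contraNT nlt => ne; rewrite /ltb ne andbT; exact/tlebP.
  move=> _.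
  have Hb : tle t (u s') by rewrite E; exact: u_mono.
  have /tlebP -> : tle t (u s') by [].
  rewrite los -E eqxx /= ps; split=> //.
  by apply: rega_in; split => //=; rewrite los E; exact: tle_refl.
- rewrite andbF /= => /ltbP' [h1 h2].
  have Hb : ~ tle t (u s').
    move=> h; case: (tle_cmp h (u_mono ss')) => // h'.
    have tr : u s != t by apply/eqP => E; apply: Ha; rewrite E; exact: tle_refl.
    case: (tle_below h' tr) => _ h3; apply: h2; exact: tle_anti h1 h3.
  have /negbTE -> /= : ~~ tleb t (u s') by apply/tlebP.
  rewrite sr ps /=.
  have -> /= : ltb (tpar t) (u s) by apply/ltbP'.
  split=> //; apply: regb_in => //=; apply/orP; right; apply/ltbP'; split.
    exact: tle_trans h1 (u_mono ss').
  move=> E; apply: h2; apply: (tle_anti h1); rewrite E; exact: u_mono.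
Qed.

Lemma leaf_in l1 l2 : l1 \in leaves S -> l2 \in leaves T -> inE' (l1, l2).
Proof.
move=> h1 h2; case: (tlebP l2 (u l1)) => Ha /=.
  by apply: rega_in; split => //=; rewrite -(leaf_max h2 Ha); exact: lo_u.
by apply: regb_in => //=; rewrite /lf h1.
Qed.

Lemma reg_step y : rega y -> y != rt -> rega (pp y) /\
  (forall x, rega x -> ptle x y -> x <> y -> ptle x (pp y)).
Proof.
case: y => s t [/= hlo Ha] hne; rewrite /pp /=.
have /tlebP -> : tle t (u s) by [].
case: (eqVneq t (lo s)) => Hl.
- have sr : s != troot S.
    apply: contraNneq hne => E; move: Hl; rewrite E lo_r => ->; done.
  rewrite (lo_ne sr) in Hl; subst t.
  split; first by split; [exact: lo_u|exact: tle_refl].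
  case=> s0 t0 [h1 h2] [/= h3 h4] ne; split => //=.
  case: (eqVneq s0 s) => [E|ne']; last by case: (tle_below h3 ne').
  subst s0; exfalso; apply: ne; congr pair; apply: (tle_anti h4).
  by move: h1; rewrite /= (lo_ne sr).
- have tr : t != troot T.
    apply: contra_neq Hl => E; rewrite E in hlo *; by rewrite (tle_r_eq hlo).
  have h1 : tle (lo s) (tpar t) by case: (tle_below hlo _) => //; rewrite eq_sym.
  split; first by split=> //; exact: tle_trans (tle_par t) Ha.
  case=> s0 t0 [g1 g2] [/= g3 g4] ne; split => //=.
  case: (eqVneq t0 t) => [E|ne']; last by case: (tle_below g4 ne').
  subst t0; exfalso.
  have ns : s0 != s by apply/eqP => E; apply: ne; rewrite E.
  case: (tle_below g3 ns) => sr h.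
  apply: (negP Hl); apply/eqP; symmetry; apply: (tle_anti hlo); rewrite (lo_ne sr).
  exact: tle_trans g2 (u_mono h).
Qed.
Local Notation EA := {x : edge S * edge T | inE' x}.

Definition mkA y (h : inE' y) : EA := exist _ y h.
Definition rootA : EA := exist _ rt rt_in.
Lemma pp_in x : inE' x -> inE' (pp x).
Proof.
move=> h; case: (eqVneq x rt) => [->|ne]; first by rewrite pp_rt; exact: rt_in.
by case: (pp_spec h ne).
Qed.
Definition parA (x : EA) : EA := exist _ (pp (val x)) (pp_in (valP x)).
Lemma parA_root : parA rootA = rootA.
Proof. by apply: val_inj; exact: pp_rt. Qed.

Lemma dp_pp y : inE' y -> y != rt -> dp (pp y) < dp y.
Proof.
move=> h ne; case: (pp_spec h ne) => _ [[h1 [-> _]]|[h1 [-> _]]]; rewrite /dp /=;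
  rewrite (dep_par h1); lia.
Qed.

Lemma treachA (x : EA) : exists n, iter n parA x = rootA.
Proof.
move: {2}(dp (val x)) (leqnn (dp (val x))) => k; elim: k x => [|k IH] x hk.
  case: (eqVneq (val x) rt) => [E|ne].
    by exists 0; apply: val_inj; rewrite /= E.
  by have := dp_pp (valP x) ne; lia.
case: (eqVneq (val x) rt) => [E|ne].
  by exists 0; apply: val_inj; rewrite /= E.
have hlt := dp_pp (valP x) ne.
have [n hn] : exists n, iter n parA (parA x) = rootA by apply: IH; rewrite -ltnS; exact: leq_trans hlt hk.
by exists n.+1; rewrite iterSr.
Qed.

Definition TA : tree := @Tree EA rootA parA parA_root treachA.

Lemma childrenA (x : EA) : val @: (@children TA x) =
  if dir (val x) then [set ((val x).1, t') | t' in children (val x).2]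
  else [set (s', (val x).2) | s' in children (val x).1].
Proof.
apply/setP => z; apply/imsetP/idP.
- case=> c; rewrite inE => /andP [cr /eqP pc] ->.
  have vr : val c != rt.
    by apply: contra cr => /eqP E; apply/eqP/val_inj; rewrite E.
  have vx : pp (val c) = val x by rewrite -pc.
  case: (pp_spec (valP c) vr) => _ [[h1 [h2 h3]]|[h1 [h2 h3]]]; rewrite vx in h2 h3.
  + rewrite (negbTE h3); apply/imsetP; exists (val c).1.
      by rewrite h2 inE h1 /= eqxx.
    by rewrite h2; case: (val c).
  + rewrite h3; apply/imsetP; exists (val c).2.
      by rewrite h2 inE h1 /= eqxx.
    by rewrite h2; case: (val c).
- case: ifP => hd /imsetP [w]; rewrite inE => /andP [wr /eqP pw] ->.
  + case: (down_T (valP x) hd wr pw) => hin hpp.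
    exists (mkA hin) => //; rewrite inE; apply/andP; split.
      apply/eqP => /(f_equal val) /= /(f_equal snd) /= E; by rewrite E eqxx in wr.
    by apply/eqP; apply: val_inj.
  + case: (down_S (valP x) (negbT hd) wr pw) => hin hpp.
    exists (mkA hin) => //; rewrite inE; apply/andP; split.
      apply/eqP => /(f_equal val) /= /(f_equal fst) /= E; by rewrite E eqxx in wr.
    by apply/eqP; apply: val_inj.
Qed.
Lemma leavesA_img : val @: (@leaves TA) = setX (leaves S) (leaves T).
Proof.
apply/setP => z; apply/imsetP/idP.
- case=> x; rewrite inE => /eqP hx ->.
  have := childrenA x; rewrite hx imset0 => E.
  rewrite inE; move: E; case: ifP => hd E.
  + have c0 : children (val x).2 == set0.
      by rewrite -(imset_eq0 (fun t' => ((val x).1, t'))) -E.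
    have l2 : (val x).2 \in leaves T by rewrite inE.
    rewrite l2 andbT; case/orP: hd => [/ltbP' [h ne]|//].
    by exfalso; apply: ne; symmetry; apply: leaf_max l2 h.
  + have c0 : children (val x).1 == set0.
      by rewrite -(imset_eq0 (fun s' => (s', (val x).2))) -E.
    have l1 : lf (val x).1 by rewrite /lf inE.
    by move: hd; rewrite /dir l1 orbT.
- rewrite inE => /andP [l1 l2].
  exists (mkA (leaf_in l1 l2)); last by case: z l1 l2.
  rewrite inE; apply/eqP.
  have := childrenA (mkA (leaf_in l1 l2)); rewrite /= /dir /lf l1 orbT.
  have l2' : children z.2 = set0 by move: l2; rewrite inE => /eqP.
  rewrite l2' imset0 => /eqP.
  by rewrite imset_eq0 => /eqP.
Qed.

Lemma vertexA (a : EA) : a \notin @leaves TA ->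
  {in @children TA a &, injective val} /\
  (val @: (@children TA a) = [set (s', (val a).2) | s' in children (val a).1]
   \/ val @: (@children TA a) = [set ((val a).1, t') | t' in children (val a).2]).
Proof.
move=> _; split; first by move=> x y _ _; apply: val_inj.
by rewrite childrenA; case: ifP => _; [right|left].
Qed.

Lemma leavesA_inj : {in @leaves TA &, injective (val : EA -> _)}.
Proof. by move=> x y _ _; apply: val_inj. Qed.

Definition ShA : shuffle S T :=
  @Shuffle S T TA val (erefl _) leavesA_inj leavesA_img vertexA.

Lemma chainA (x y : EA) : rega (val x) -> rega (val y) -> ptle (val x) (val y) ->
  tle (T:=TA) x y.
Proof.
move: {2}(dp (val y)) (leqnn (dp (val y))) => k; elim: k x y => [|k IH] x y hk rx ry pxy.
- case: (eqVneq x y) => [->|ne]; first exact: tle_refl.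
  case: (eqVneq (val y) rt) => [E|ny].
    exfalso; move: pxy ne; rewrite E; case=> h1 h2; case/negP; apply/eqP; apply: val_inj.
    by rewrite E (surjective_pairing (val x)) (tle_r_eq h1) (tle_r_eq h2).
  by have := dp_pp (valP y) ny; lia.
- case: (eqVneq x y) => [->|ne]; first exact: tle_refl.
  case: (eqVneq (val y) rt) => [E|ny].
    exfalso; move: pxy ne; rewrite E; case=> h1 h2; case/negP; apply/eqP; apply: val_inj.
    by rewrite E (surjective_pairing (val x)) (tle_r_eq h1) (tle_r_eq h2).
  have hlt := dp_pp (valP y) ny.
  case: (reg_step ry ny) => rp H.
  have h : tle (T:=TA) x (parA y).
    apply: IH => //=; first by rewrite -ltnS; exact: leq_trans hlt hk.
    apply: H => // E; case/negP: ne; apply/eqP; exact: val_inj.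
  exact: tle_trans h (tle_par (T:=TA) y).
Qed.

Lemma part2 : exists A : shuffle S T, exists D : {set edge (@sh_tree S T A)},
        is_chain (@tle (@sh_tree S T A)) D /\ @sh_lab S T A @: D = C.
Proof.
exists ShA, [set x : EA | val x \in C]; split.
- move=> x y; rewrite !inE => hx hy.
  case: (Cch hx hy) => h; [left|right]; apply: chainA => //; exact: C_rega.
- apply/setP => z; apply/imsetP/idP.
  + by case=> x; rewrite inE => h ->.
  + move=> hz; exists (mkA (rega_in (C_rega hz))) => //; by rewrite inE.
Qed.
End Part2.

Theorem mainTheorem14 (S T : tree) :
  (forall A : shuffle S T,
      injective (@sh_lab S T A) /\
      (forall a a' : edge (@sh_tree S T A), tle a a' -> ptle (@sh_lab S T A a) (@sh_lab S T A a')))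
  /\
  (forall C : {set edge S * edge T},
      C != set0 -> is_chain (@ptle S T) C ->
      exists A : shuffle S T, exists D : {set edge (@sh_tree S T A)},
        is_chain (@tle (@sh_tree S T A)) D /\ @sh_lab S T A @: D = C).
Proof.
split.
- move=> A; split; first exact: lab_inj.
  move=> a a'; exact: lab_mono.
- move=> C _ Cch; exact: part2.
Qed.
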